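(* Let $\phi_*\in(0,\pi/2)$, $\delta_*=\min\{\phi_*,\tfrac\pi2-\phi_*\}$, and $R\ge\max\{\frac{34r}{\phi_*},\frac{14.6r}{\delta_*\sin\phi_*}\}$. For the billiard map on $Q(\phi_*,R)$ and any $x\in M_r$ for which $x_0,x_1,x_2$ are defined, if $d_1<2r$ then $x_0\in V(\delta_* )$ and $x_2\in U(\delta_* )$.
   Context: Setting: $r=1$, $\phi_*\in(0,\pi/2)$, $Q(\phi_*,R)=D(O_r,r)\cap D(O_R,R)$ with $|O_rO_R|=\sqrt{R^2-r^2\sin^2\phi_*}-r\cos\phi_*$; boundary arcs $\Gamma_r$ (position angles $\phi\in[\phi_*,2\pi-\phi_*]$ about $O_r$, measured counterclockwise from $\overrightarrow{O_RO_r}$) and $\Gamma_R$ (angles in $(-\Phi_*,\Phi_* )$ about $O_R$, $R\sin\Phi_*=r\sin\phi_*$). Phase space $M=M_r\sqcup M_R$, coordinates $(\phi,\theta)$, $\theta\in(0,\pi)$ the angle from the positive tangent direction; $F$ the billiard map. $M_r^{in}=M_r\cap F(M_R)$, $M_r^{out}=M_r\cap F^{-1}(M_R)$, $M_R^{out}=M_R\cap F^{-1}(M_r)$. Notation for $x\in M_r$: $n_0=\inf\{n\ge0:F^nx\in M_r^{out}\}$, $x_0=(\phi_0,\theta_0)=F^{n_0}x$, $x_1=(\phi_1,\theta_1)=Fx_0\in M_R$, $n_1=\inf\{n\ge0:F^nx_1\in M_R^{out}\}$, $x_2=(\phi_2,\theta_2)=F^{n_1+1}x_1\in M_r^{in}$;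 $d_0=r\sin\theta_0$, $d_1=R\sin\theta_1$, $d_2=r\sin\theta_2$. With $x_*=(2\pi-\phi_*,\phi_* )$, $y_*=(\phi_*,\pi-\phi_* )$, $I(\phi,\theta)=(\phi,\pi-\theta)$ and Euclidean balls $B(z,\delta)$ in $(\phi,\theta)$ coordinates: $V(\delta)=(B(x_*,\delta)\cup B(y_*,\delta))\cap M_r^{out}$, $U(\delta)=(B(Ix_*,\delta)\cup B(Iy_*,\delta))\cap M_r^{in}$. *)

(* Defs.v *)
From Stdlib Require Import Reals Lra.
Open Scope R_scope.

(* Billiard in the lens Q(phis,Rb) = D(O_r,r) ∩ D(O_R,Rb), with r = 1.
   Coordinates: O_R = (0,0), O_r = (c,0) where c = |O_r O_R|; the vector
   O_R -> O_r is the positive x-axis, from which position angles are measured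
   counterclockwise. *)

Definition rr : R := 1.

Definition dist_centers (phis Rb : R) : R :=
  sqrt (Rb ^ 2 - rr ^ 2 * (sin phis) ^ 2) - rr * cos phis.

Definition Phis (phis Rb : R) : R := asin (rr * sin phis / Rb).

Inductive side := Sr | SR.

Record phase := mkPhase { sd : side; ph : R; th : R }.

Definition inMr (phis Rb : R) (x : phase) : Prop :=
  sd x = Sr /\ phis <= ph x <= 2 * PI - phis /\ 0 < th x < PI.

Definition inMR (phis Rb : R) (x : phase) : Prop :=
  sd x = SR /\ - Phis phis Rb < ph x < Phis phis Rb /\ 0 < th x < PI.

Definition inM (phis Rb : R) (x : phase) : Prop := inMr phis Rb x \/ inMR phis Rb x.

Definition center_x (phis Rb : R) (x : phase) : R :=
  match sd x with Sr => dist_centers phis Rb | SR => 0 end.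
Definition radius (Rb : R) (x : phase) : R :=
  match sd x with Sr => rr | SR => Rb end.

Definition posx (phis Rb : R) (x : phase) : R :=
  center_x phis Rb x + radius Rb x * cos (ph x).
Definition posy (phis Rb : R) (x : phase) : R :=
  radius Rb x * sin (ph x).

Definition tanx (x : phase) : R := - sin (ph x).
Definition tany (x : phase) : R := cos (ph x).

(* outgoing unit velocity: tangent rotated counterclockwise by theta
   (towards the interior of Q) *)
Definition velx (x : phase) : R := cos (th x) * tanx x - sin (th x) * cos (ph x).
Definition vely (x : phase) : R := cos (th x) * tany x - sin (th x) * sin (ph x).

(* billiard map as a (functional) relation: F x = y *)
Definition Fmap (phis Rb : R) (x y : phase) : Prop :=
  inM phis Rb x /\ inM phis Rb y /\
  (exists t : R, 0 < t /\
     posx phis Rb y = posx phis Rb x + t * velx x /\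
     posy phis Rb y = posy phis Rb x + t * vely x) /\
  cos (th y) = velx x * tanx y + vely x * tany y.

Inductive Fiter (phis Rb : R) : nat -> phase -> phase -> Prop :=
| Fiter0 : forall x, Fiter phis Rb O x x
| FiterS : forall n x y z, Fmap phis Rb x y -> Fiter phis Rb n y z ->
                           Fiter phis Rb (S n) x z.

Definition Mr_in (phis Rb : R) (x : phase) : Prop :=
  inMr phis Rb x /\ exists y, inMR phis Rb y /\ Fmap phis Rb y x.
Definition Mr_out (phis Rb : R) (x : phase) : Prop :=
  inMr phis Rb x /\ exists y, inMR phis Rb y /\ Fmap phis Rb x y.
Definition MR_out (phis Rb : R) (x : phase) : Prop :=
  inMR phis Rb x /\ exists y, inMr phis Rb y /\ Fmap phis Rb x y.

(* x0 = F^{n0} x with n0 = inf{n >= 0 : F^n x in Mr_out} *)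
Definition is_x0 (phis Rb : R) (x x0 : phase) : Prop :=
  exists n0 : nat, Fiter phis Rb n0 x x0 /\ Mr_out phis Rb x0 /\
    forall (m : nat) (z : phase), (m < n0)%nat -> Fiter phis Rb m x z ->
      ~ Mr_out phis Rb z.

Definition is_x1 (phis Rb : R) (x0 x1 : phase) : Prop := Fmap phis Rb x0 x1.

(* x2 = F^{n1+1} x1 with n1 = inf{n >= 0 : F^n x1 in MR_out} *)
Definition is_x2 (phis Rb : R) (x1 x2 : phase) : Prop :=
  exists (n1 : nat) (z : phase), Fiter phis Rb n1 x1 z /\ MR_out phis Rb z /\
    (forall (m : nat) (w : phase), (m < n1)%nat -> Fiter phis Rb m x1 w ->
      ~ MR_out phis Rb w) /\
    Fmap phis Rb z x2.

Definition delta_star (phis : R) : R := Rmin phis (PI / 2 - phis).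

Definition in_ball (a b delta : R) (x : phase) : Prop :=
  sqrt ((ph x - a) ^ 2 + (th x - b) ^ 2) < delta.

(* x_* = (2pi - phis, phis), y_* = (phis, pi - phis), I(phi,theta) = (phi, pi - theta) *)
Definition Vset (phis Rb delta : R) (x : phase) : Prop :=
  (in_ball (2 * PI - phis) phis delta x \/ in_ball phis (PI - phis) delta x) /\
  Mr_out phis Rb x.
Definition Uset (phis Rb delta : R) (x : phase) : Prop :=
  (in_ball (2 * PI - phis) (PI - phis) delta x \/ in_ball phis phis delta x) /\
  Mr_in phis Rb x.

(* Main.v *)
Require Import Defs.
From Stdlib Require Import Reals Lra Psatz Lia.
Open Scope R_scope.

Lemma sin_lb_eq y : sin_lb y = y - y^3/6 + y^5/120 - y^7/5040.
Proof. unfold sin_lb, sin_approx. cbn [sum_f_R0]. unfold sin_term.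
  rewrite !INR_IZR_INZ. cbn -[IZR pow]. field. Qed.

Lemma sin_lb_ge y : 0 <= y <= 1 -> 4/5 * y <= sin_lb y.
Proof. intros H. rewrite sin_lb_eq.
  assert (0 <= y^3 <= y).
  { split. apply pow_le; lra. replace (y^3) with (y*(y*y)) by ring.
    assert (0<= y*y <= 1) by nra. nra. }
  assert (0 <= y^7 <= y).
  { split. apply pow_le; lra. replace (y^7) with (y*(y^6)) by ring.
    assert (0<= y^6 <= 1). split. apply pow_le; lra.
    rewrite <- (pow1 6). apply pow_incr. lra. nra. }
  assert (0 <= y^5) by (apply pow_le; lra). unfold Rdiv. lra.
Qed.

Lemma Jb y b : 0 <= y <= PI/2 -> sin y <= b -> b <= 1/3 -> y <= 5/4 * b.
Proof. intros Hy Hs Hb.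
  destruct (Rle_lt_dec y 1) as [H1|H1].
  - assert (Hl := sin_lb_ge y (conj (proj1 Hy) H1)).
    destruct (SIN y) as [HS _]; [lra| pose PI2_1; lra| lra].
  - exfalso. assert (sin 1 < sin y).
    { apply sin_increasing_1; pose PI2_1; lra. }
    assert (Hl := sin_lb_ge 1 ltac:(lra)).
    destruct (SIN 1) as [HS _]; [lra| pose PI2_1; lra| lra].
Qed.

Lemma pyth x : sin x ^ 2 + cos x ^ 2 = 1.
Proof. rewrite <- (sin2_cos2 x). unfold Rsqr. ring. Qed.

Lemma velx_eq p : velx p = - sin (ph p + th p).
Proof. unfold velx, tanx. rewrite sin_plus. ring. Qed.
Lemma vely_eq p : vely p = cos (ph p + th p).
Proof. unfold vely, tany. rewrite cos_plus. ring. Qed.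

Lemma cos_shift2 a : cos (a - 2*PI) = cos a.
Proof. rewrite cos_minus, cos_2PI, sin_2PI. ring. Qed.
Lemma sin_shift2 a : sin (a - 2*PI) = sin a.
Proof. rewrite sin_minus, cos_2PI, sin_2PI. ring. Qed.
Lemma sin_shift1 a : sin (a - PI) = - sin a.
Proof. rewrite sin_minus, cos_PI, sin_PI. ring. Qed.
Lemma cos_shift1 a : cos (a - PI) = - cos a.
Proof. rewrite cos_minus, cos_PI, sin_PI. ring. Qed.

Lemma cos_le_Mr ph0 f : 0 < ph0 < PI/2 -> ph0 <= f <= 2*PI - ph0 -> cos f <= cos ph0.
Proof. intros H Hf. destruct (Rle_lt_dec f PI).
  - apply cos_decr_1; lra.
  - replace f with (-(2*PI - f) + 2*PI) by ring. rewrite cos_plus, cos_2PI, sin_2PI, cos_neg.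
    replace (cos (2*PI - f)*1 - sin (-(2*PI-f)) * 0) with (cos (2*PI - f)) by ring.
    apply cos_decr_1; lra.
Qed.

Lemma dc_facts phis Rb : 0 < phis < PI/2 -> 17 <= Rb ->
  let c := dist_centers phis Rb in
  (c + cos phis)^2 = Rb^2 - sin phis ^2 /\ 0 <= c + cos phis /\ Rb - 2 <= c.
Proof. intros H HR c. unfold c, dist_centers, rr.
  assert (Hs := pyth phis).
  assert (0 < sin phis) by (apply sin_gt_0; lra).
  assert (0 < cos phis) by (apply cos_gt_0; lra).
  assert (Hp: 0 <= Rb ^ 2 - 1 ^ 2 * sin phis ^ 2) by nra.
  replace (sqrt (Rb ^ 2 - 1 ^ 2 * sin phis ^ 2) - 1 * cos phis + cos phis)
    with (sqrt (Rb ^ 2 - 1 ^ 2 * sin phis ^ 2)) by ring.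
  assert (Hq := sqrt_sqrt _ Hp). assert (Hq0 := sqrt_pos (Rb ^ 2 - 1 ^ 2 * sin phis ^ 2)).
  set (q := sqrt (Rb ^ 2 - 1 ^ 2 * sin phis ^ 2)) in *.
  split; [nra|split; [lra|]].
  assert (Rb - 1 <= q). { destruct (Rle_lt_dec (Rb-1) q); auto. nra. }
  nra.
Qed.

Lemma sq_inj a b : 0 <= a -> 0 <= b -> a^2 = b^2 -> a = b.
Proof. intros Ha Hb H. destruct (Req_dec (a+b) 0). lra.
  assert ((a-b)*(a+b) = 0) by nra. apply Rmult_integral in H1. lra. Qed.

Lemma Phis_facts phis Rb : 0 < phis < PI/2 -> 17 <= Rb ->
  sin (Phis phis Rb) = sin phis / Rb /\ 0 <= Phis phis Rb <= PI/2 /\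
  Rb * cos (Phis phis Rb) = dist_centers phis Rb + cos phis.
Proof. intros H HR. destruct (dc_facts phis Rb H HR) as [D1 [D2 D3]].
  assert (0 < sin phis) by (apply sin_gt_0; lra).
  assert (sin phis <= 1) by apply SIN_bound.
  assert (Hs : -1 <= rr * sin phis / Rb <= 1).
  { unfold rr. split; apply (Rmult_le_reg_r Rb); try lra; field_simplify; lra. }
  assert (HS: sin (Phis phis Rb) = sin phis / Rb).
  { unfold Phis. rewrite sin_asin; auto. unfold rr; field; lra. }
  assert (HB := asin_bound (rr * sin phis / Rb)). fold (Phis phis Rb) in HB.
  assert (0 <= Phis phis Rb).
  { destruct (Rle_lt_dec 0 (Phis phis Rb)); auto.
    assert (sin (Phis phis Rb) < 0). { apply sin_lt_0_var; lra. }
    rewrite HS in H2. assert (0 < sin phis / Rb) by (apply Rdiv_lt_0_compat; lra). lra. }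
  split; auto. split; [lra|].
  assert (0 <= cos (Phis phis Rb)) by (apply cos_ge_0; lra).
  apply sq_inj; [nra|lra|]. rewrite D1.
  assert (Hp := pyth (Phis phis Rb)). rewrite HS in Hp.
  replace ((Rb * cos (Phis phis Rb))^2) with (Rb^2 * cos (Phis phis Rb)^2) by ring.
  replace (cos (Phis phis Rb)^2) with (1 - (sin phis / Rb)^2) by lra.
  field. lra.
Qed.

Lemma MR_facts phis Rb p : 0 < phis < PI/2 -> 17 <= Rb -> inMR phis Rb p ->
  let c := dist_centers phis Rb in
  posx phis Rb p = Rb * cos (ph p) /\ posy phis Rb p = Rb * sin (ph p) /\
  posx phis Rb p ^2 + posy phis Rb p ^2 = Rb^2 /\
  (posx phis Rb p - c)^2 + posy phis Rb p ^2 < 1 /\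
  - sin phis < posy phis Rb p < sin phis /\
  - (5/4 * (sin phis / Rb)) <= ph p <= 5/4 * (sin phis / Rb) /\
  0 < cos (ph p).
Proof. intros H HR [Hsd [Hph Hth]] c.
  destruct (dc_facts phis Rb H HR) as [D1 [D2 D3]].
  destruct (Phis_facts phis Rb H HR) as [P1 [P2 P3]].
  assert (0 < sin phis) by (apply sin_gt_0; lra).
  assert (sin phis <= 1) by apply SIN_bound.
  assert (HPb : Phis phis Rb <= 5/4 * (sin phis / Rb)).
  { apply Jb; [lra| lra|]. apply (Rmult_le_reg_r Rb); [lra|]. field_simplify; lra. }
  assert (Hx : posx phis Rb p = Rb * cos (ph p)).
  { unfold posx, center_x, radius. rewrite Hsd. ring. }
  assert (Hy : posy phis Rb p = Rb * sin (ph p)).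
  { unfold posy, radius. rewrite Hsd. ring. }
  assert (Hc : cos (Phis phis Rb) < cos (ph p)).
  { destruct (Rle_lt_dec 0 (ph p)).
    - apply cos_decreasing_1; lra.
    - rewrite <- (cos_neg (ph p)). apply cos_decreasing_1; lra. }
  assert (Hsn : - (sin phis / Rb) < sin (ph p) < sin phis / Rb).
  { rewrite <- P1. split.
    - rewrite <- sin_neg. apply sin_increasing_1; lra.
    - apply sin_increasing_1; lra. }
  assert (Hp := pyth (ph p)).
  rewrite Hx, Hy. split; auto. split; auto.
  split; [nra|]. split.
  { unfold c. 
    replace ((Rb * cos (ph p) - dist_centers phis Rb) ^ 2 + (Rb * sin (ph p)) ^ 2)
      with (Rb^2 - 2 * dist_centers phis Rb * (Rb * cos (ph p)) + dist_centers phis Rb ^2)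
      by (rewrite <- (Rmult_1_r (Rb^2)), <- Hp; ring).
    assert (Rb * cos (Phis phis Rb) < Rb * cos (ph p)) by nra.
    assert (0 < dist_centers phis Rb) by lra.
    assert (Hcc: cos phis ^2 + sin phis ^2 = 1) by (rewrite <- (pyth phis); ring).
    nra. }
  split. { split; apply (Rmult_lt_reg_r (/Rb)); try (apply Rinv_0_lt_compat; lra);
    field_simplify; try lra; unfold Rdiv in *; lra. }
  split; [lra|]. apply cos_gt_0; lra.
Qed.

Lemma Mr_facts phis Rb p : 0 < phis < PI/2 -> 17 <= Rb -> inMr phis Rb p ->
  let c := dist_centers phis Rb in
  posx phis Rb p = c + cos (ph p) /\ posy phis Rb p = sin (ph p) /\
  (posx phis Rb p - c)^2 + posy phis Rb p ^2 = 1 /\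
  posx phis Rb p ^2 + posy phis Rb p ^2 = Rb^2 - 2 * c * (cos phis - cos (ph p)) /\
  cos (ph p) <= cos phis /\ Rb - 2 <= c.
Proof. intros H HR [Hsd [Hph Hth]] c.
  destruct (dc_facts phis Rb H HR) as [D1 [D2 D3]].
  assert (Hx : posx phis Rb p = c + cos (ph p)).
  { unfold posx, center_x, radius, rr, c. rewrite Hsd. ring. }
  assert (Hy : posy phis Rb p = sin (ph p)).
  { unfold posy, radius, rr. rewrite Hsd. ring. }
  assert (Hp := pyth (ph p)). assert (Hp2 := pyth phis).
  rewrite Hx, Hy. split; auto. split; auto. split. nra.
  split. { fold c in D1. nra. } split; [|auto]. apply cos_le_Mr; lra.
Qed.

Lemma inM_facts phis Rb p : 0 < phis < PI/2 -> 17 <= Rb -> inM phis Rb p ->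
  let c := dist_centers phis Rb in
  posx phis Rb p ^2 + posy phis Rb p ^2 <= Rb^2 /\
  (posx phis Rb p - c)^2 + posy phis Rb p ^2 <= 1.
Proof. intros H HR [Hp|Hp] c.
  - destruct (Mr_facts phis Rb p H HR Hp) as [_ [_ [A [B [C D]]]]]. fold c in A, B, D.
    split; [|lra]. rewrite B. assert (0 <= 2 * c * (cos phis - cos (ph p))).
    { apply Rmult_le_pos; lra. } lra.
  - destruct (MR_facts phis Rb p H HR Hp) as [_ [_ [A [B _]]]]. fold c in B. lra.
Qed.

Lemma vel_unit p : velx p ^2 + vely p ^2 = 1.
Proof. rewrite velx_eq, vely_eq. rewrite <- (pyth (ph p + th p)). ring. Qed.

Lemma uniq_side phis Rb w y y' : 0 < phis < PI/2 -> 17 <= Rb ->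
  Fmap phis Rb w y -> Fmap phis Rb w y' -> inMr phis Rb y -> inMR phis Rb y' -> False.
Proof. intros H HR [Hw [_ [[t [Ht [Ex Ey]]] _]]] [_ [_ [[t' [Ht' [Ex' Ey']]] _]]] Hy Hy'.
  destruct (inM_facts phis Rb w H HR Hw) as [W1 W2].
  destruct (Mr_facts phis Rb y H HR Hy) as [_ [_ [Y1 [Y2 [Y3 Y4]]]]].
  destruct (MR_facts phis Rb y' H HR Hy') as [_ [_ [Z1 [Z2 _]]]].
  assert (V := vel_unit w).
  set (c := dist_centers phis Rb) in *.
  assert (Y2' : posx phis Rb y ^ 2 + posy phis Rb y ^ 2 <= Rb ^ 2).
  { rewrite Y2. assert (0 <= 2 * c * (cos phis - cos (ph y))).
    { apply Rmult_le_pos; lra. } lra. }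
  rewrite Ex, Ey in Y1, Y2'. rewrite Ex', Ey' in Z1, Z2.
  set (wx := posx phis Rb w) in *. set (wy := posy phis Rb w) in *.
  set (vx := velx w) in *. set (vy := vely w) in *.
  destruct (Rlt_le_dec t t') as [Hlt|Hle].
  - set (A := (wx - c)^2 + wy^2) in *. set (B := (wx - c)*vx + wy*vy).
    assert (F1 : (wx + t * vx - c) ^ 2 + (wy + t * vy) ^ 2 = A + 2*B*t + t^2).
    { unfold A, B. rewrite <- (Rmult_1_r (t^2)), <- V. ring. }
    assert (F2 : (wx + t' * vx - c) ^ 2 + (wy + t' * vy) ^ 2 = A + 2*B*t' + t'^2).
    { unfold A, B. rewrite <- (Rmult_1_r (t'^2)), <- V. ring. }
    rewrite F1 in Y1. rewrite F2 in Z2.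
    assert (K1 : 0 <= (t'-t)*(1-A)) by (apply Rmult_le_pos; lra).
    assert (K2 : 0 < t*(1-(A + 2*B*t' + t'^2))) by (apply Rmult_lt_0_compat; lra).
    assert (K3 : 0 < t*t'*(t'-t)) by (apply Rmult_lt_0_compat; [apply Rmult_lt_0_compat|]; lra).
    assert (t' * (A + 2*B*t + t^2) = (t'-t)*A + t*(A + 2*B*t' + t'^2) + t*t'*(t-t')) by ring.
    nra.
  - set (G := wx^2 + wy^2) in *. set (Hh := wx*vx + wy*vy).
    assert (F1 : (wx + t * vx) ^ 2 + (wy + t * vy) ^ 2 = G + 2*Hh*t + t^2).
    { unfold G, Hh. rewrite <- (Rmult_1_r (t^2)), <- V. ring. }
    assert (F2 : (wx + t' * vx) ^ 2 + (wy + t' * vy) ^ 2 = G + 2*Hh*t' + t'^2).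
    { unfold G, Hh. rewrite <- (Rmult_1_r (t'^2)), <- V. ring. }
    rewrite F1 in Y2'. rewrite F2 in Z1.
    assert (t * (G + 2*Hh*t' + t'^2) = (t-t')*G + t'*(G + 2*Hh*t + t^2) + t*t'*(t'-t)) by ring.
    assert (K1 : (t-t')*G <= (t-t')*Rb^2) by (apply Rmult_le_compat_l; lra).
    assert (K2 : t'*(G + 2*Hh*t + t^2) <= t'*Rb^2) by (apply Rmult_le_compat_l; lra).
    assert (t*t'*(t-t') <= 0) by nra.
    assert (t = t').
    { destruct Hle as [Hl|]; auto. assert (0 < t*t'*(t-t')).
      apply Rmult_lt_0_compat; [apply Rmult_lt_0_compat|]; lra. lra. }
    subst t'. lra.
Qed.

Lemma SR_step phis Rb w w' : 0 < phis < PI/2 -> 17 <= Rb ->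
  Fmap phis Rb w w' -> inMR phis Rb w -> inMR phis Rb w' -> th w' = th w.
Proof. intros H HR [_ [_ [[t [Ht [Ex Ey]]] Hc]]] Hw Hw'.
  destruct (MR_facts phis Rb w H HR Hw) as [X1 [X2 _]].
  destruct (MR_facts phis Rb w' H HR Hw') as [Y1 [Y2 _]].
  rewrite X1, Y1, velx_eq in Ex. rewrite X2, Y2, vely_eq in Ey.
  rewrite velx_eq, vely_eq in Hc. unfold tanx, tany in Hc.
  rewrite sin_plus in Ex, Hc. rewrite cos_plus in Ey, Hc.
  assert (Rb * cos (th w') = Rb * cos (th w)).
  { rewrite Hc. 
    replace (Rb * (- (sin (ph w) * cos (th w) + cos (ph w) * sin (th w)) * - sin (ph w') +
      (cos (ph w) * cos (th w) - sin (ph w) * sin (th w)) * cos (ph w')))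
    with ((sin (ph w) * cos (th w) + cos (ph w) * sin (th w)) * (Rb * sin (ph w')) +
      (cos (ph w) * cos (th w) - sin (ph w) * sin (th w)) * (Rb * cos (ph w'))) by ring.
    rewrite Ex, Ey. assert (Pp := pyth (ph w)).
    match goal with |- ?L = ?R => assert (L - R = R * (sin (ph w)^2 + cos (ph w)^2 - 1)) by ring end.
    rewrite Pp in H0. lra. }
  destruct Hw as [_ [_ T1]]. destruct Hw' as [_ [_ T2]].
  apply cos_inj; try lra. apply (Rmult_eq_reg_l Rb); lra.
Qed.

Lemma iter_R phis Rb : 0 < phis < PI/2 -> 17 <= Rb -> forall n w z,
  Fiter phis Rb n w z -> inMR phis Rb w ->
  (forall (m : nat) (w' : phase), (m < n)%nat -> Fiter phis Rb m w w' -> ~ MR_out phis Rb w') ->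
  inMR phis Rb z /\ th z = th w.
Proof. intros H HR n. induction n as [|n IH]; intros w z Hf Hw Hmin.
  - inversion Hf; subst. split; auto.
  - inversion Hf; subst. rename y into w1.
    assert (Hw1 : inMR phis Rb w1).
    { pose proof H1 as H1c. destruct H1c as [_ [[Hr|Hr] _]]; auto. exfalso.
      assert (HM : MR_out phis Rb w) by (split; [auto| exists w1; split; auto]).
      exact (Hmin O w ltac:(lia) (Fiter0 _ _ w) HM). }
    assert (Hth := SR_step phis Rb w w1 H HR H1 Hw Hw1).
    destruct (IH w1 z H2 Hw1) as [A B].
    { intros m w' Hm Hf'. apply (Hmin (S m) w'); [lia|]. econstructor; eauto. }
    split; auto. lra.
Qed.

Lemma sagitta px py qx qy vx vy tau : px = qx + tau * vx -> py = qy + tau * vy ->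
  vx^2 + vy^2 = 1 -> qx^2 + qy^2 - (px^2 + py^2) <= (qx*vx + qy*vy)^2.
Proof. intros -> -> V.
  assert (E : qx ^ 2 + qy ^ 2 - ((qx + tau * vx) ^ 2 + (qy + tau * vy) ^ 2) =
     - 2 * tau * (qx*vx + qy*vy) - tau^2 * (vx^2+vy^2)) by ring.
  rewrite E, V. assert (H0 := pow2_ge_0 (qx*vx + qy*vy + tau)). nra. Qed.

Lemma cos_2PI_minus y : cos (2*PI - y) = cos y.
Proof. rewrite <- cos_shift2. replace (2*PI - y - 2*PI) with (-y) by ring. apply cos_neg. Qed.
Lemma sin_2PI_minus y : sin (2*PI - y) = - sin y.
Proof. rewrite <- sin_shift2. replace (2*PI - y - 2*PI) with (-y) by ring. apply sin_neg. Qed.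

Definition NC phis Rb E d := 0 < phis < PI/2 /\ 17 <= Rb /\ 0 < E /\
  E * (Rb * sin phis) = 1 /\ 146/10 * E <= d /\ d <= phis /\ d <= PI/2 - phis.

Lemma NC_facts phis Rb E d : NC phis Rb E d ->
  0 < sin phis /\ sin phis <= 1 /\ 0 < cos phis /\ sin phis ^2 + cos phis ^2 = 1 /\
  E <= 1/14 /\ / Rb <= E * sin phis /\ sin phis / Rb <= E /\ 0 < Rb.
Proof. intros [H [HR [HE [HE1 [Hd [Hd1 Hd2]]]]]].
  assert (0 < sin phis) by (apply sin_gt_0; lra).
  assert (sin phis <= 1) by apply SIN_bound.
  assert (0 < cos phis) by (apply cos_gt_0; lra).
  assert (Hp := pyth phis). assert (PI <= 4) by apply PI_4.
  split; auto. split; auto. split; auto. split; auto. split; [lra|].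
  assert (HRi : /Rb = E * sin phis).
  { apply (Rmult_eq_reg_l Rb); [|lra]. rewrite Rinv_r by lra. lra. }
  split; [lra|]. split; [|lra]. unfold Rdiv. rewrite HRi. nra.
Qed.

Lemma L2a phis u eps : 0 < phis < PI/2 -> 0 <= u <= PI - phis -> eps < 1 ->
  cos phis - eps <= cos (phis + u) -> u < PI/2 /\ sin phis * sin u <= eps.
Proof. intros H Hu He Hc.
  assert (0 < sin phis) by (apply sin_gt_0; lra).
  assert (0 < cos phis) by (apply cos_gt_0; lra).
  assert (Hp := pyth phis).
  destruct (Rlt_le_dec u (PI/2)) as [Hl|Hl].
  - split; auto. rewrite cos_plus in Hc.
    assert (0 <= sin u) by (apply sin_ge_0; lra).
    assert (cos u <= 1) by apply COS_bound. nra.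
  - exfalso. assert (cos (phis + u) <= cos (phis + PI/2)) by (apply cos_decr_1; lra).
    match goal with Hx : cos (phis + u) <= _ |- _ => rewrite (cos_plus phis (PI/2)), cos_PI2, sin_PI2 in Hx end.
    assert (1 <= cos phis + sin phis) by nra. lra.
Qed.

Lemma L2 phis Rb E d f : NC phis Rb E d -> phis <= f <= 2*PI - phis ->
  dist_centers phis Rb * (cos phis - cos f) < 2 ->
  exists u, 0 <= u <= 3 * E /\ (f = phis + u \/ f = 2*PI - phis - u).
Proof. intros N Hf Hc. pose proof N as [H [HR [HE [HE1 _]]]].
  destruct (NC_facts _ _ _ _ N) as [S0 [S1 [K0 [P [E1 [E2 [E3 R0]]]]]]].
  destruct (dc_facts phis Rb H HR) as [_ [_ D3]].
  set (c := dist_centers phis Rb) in *.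
  assert (Hb : forall u, 0 <= u <= PI - phis -> cos f = cos (phis + u) -> 0 <= u <= 3 * E).
  { intros u Hu Hcu.
    assert (He : cos phis - 2 / c <= cos (phis + u)).
    { rewrite <- Hcu. apply (Rmult_le_reg_l c); [lra|]. field_simplify; lra. }
    destruct (L2a phis u (2/c) H Hu ltac:(apply (Rmult_lt_reg_l c); [lra|]; field_simplify; lra) He)
      as [Hu2 Hs].
    assert (0 <= sin u) by (apply sin_ge_0; lra).
    assert (Hs2 : sin phis * sin u * c <= 2).
    { apply (Rmult_le_reg_r (/c)). apply Rinv_0_lt_compat; lra. field_simplify; lra. }
    assert (Hs3 : sin u * (sin phis * Rb) * (15/17) <= 2) by nra.
    assert (Hs4 : sin u <= 34/15 * E).
    { assert (sin u * (sin phis * Rb) * E * (15/17) <= 2 * E) by nra.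
      replace (sin phis * Rb * E) with 1 in H1 by lra. nra. }
    split; [lra|]. assert (u <= 5/4 * (34/15*E)) by (apply Jb; lra). lra. }
  destruct (Rle_lt_dec f PI).
  - exists (f - phis). split; [apply Hb; [lra| f_equal; ring]| left; ring].
  - exists (2*PI - phis - f). split; [apply Hb; [lra|] | right; ring].
    replace (phis + (2 * PI - phis - f)) with (2*PI - f) by ring. rewrite cos_2PI_minus; auto.
Qed.

Lemma SL x L H b : - PI <= L -> L < x -> x < H -> H <= PI -> - b <= sin x <= b -> b <= 1/3 ->
  - PI + 5/4 * b < L -> H < PI - 5/4 * b -> - (5/4 * b) <= x <= 5/4 * b.
Proof. intros H1 H2 H3 H4 Hs Hb H5 H6. assert (P := PI2_1).
  destruct (Rle_lt_dec x (PI/2)) as [A|A].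
  - destruct (Rle_lt_dec 0 x) as [B|B].
    + assert (x <= 5/4*b) by (apply Jb; lra). lra.
    + destruct (Rle_lt_dec (-(PI/2)) x) as [C|C].
      * assert (-x <= 5/4*b) by (apply Jb; [lra| rewrite sin_neg; lra| lra]). lra.
      * exfalso. assert (x + PI <= 5/4*b) by (apply Jb; [lra| rewrite neg_sin; lra| lra]). lra.
  - exfalso. assert (PI - x <= 5/4*b) by (apply Jb; [lra| rewrite sin_PI_x; lra| lra]). lra.
Qed.

Lemma ball_ok a b E d : 0 < E -> 146/10 * E <= d -> -(3*E) <= a <= 3*E -> -(7*E) <= b <= 7*E ->
  sqrt ((a)^2 + (b)^2) < d.
Proof. intros HE Hd Ha Hb. rewrite <- (sqrt_pow2 d) by lra. apply sqrt_lt_1_alt.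
  split. nra. nra. Qed.

Lemma estA phis Rb E d x0 x1 : NC phis Rb E d -> inMr phis Rb x0 -> inMR phis Rb x1 ->
  Fmap phis Rb x0 x1 -> Rb * sin (th x1) < 2 ->
  in_ball (2 * PI - phis) phis d x0 \/ in_ball phis (PI - phis) d x0.
Proof. intros N H0 H1 [_ [_ [[t [Ht [Ex Ey]]] Hc]]] Hd.
  pose proof N as [H [HR [HE [HE1 [Hdd [Hd1 Hd2]]]]]].
  destruct (NC_facts _ _ _ _ N) as [S0 [S1 [K0 [P [E1 [E2 [E3 R0]]]]]]].
  destruct (Mr_facts phis Rb x0 H HR H0) as [A1 [A2 [A3 [A4 [A5 A6]]]]].
  destruct (MR_facts phis Rb x1 H HR H1) as [B1 [B2 [B3 [B4 [B5 [B6 B7]]]]]].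
  set (c := dist_centers phis Rb) in *.
  set (f := ph x0) in *. set (th0 := th x0) in *. set (ps := ph x1) in *.
  set (al := f + th0).
  rewrite velx_eq in Ex, Hc. rewrite vely_eq in Ey, Hc. fold f th0 al in Ex, Ey, Hc.
  unfold tanx, tany in Hc. fold ps in Hc.
  assert (Hc' : cos (th x1) = cos (al - ps)) by (rewrite cos_minus, Hc; ring).
  set (sg := sin (al - ps)).
  assert (Hsg : sin (th x1) ^2 = sg ^2).
  { assert (Q1 := pyth (th x1)). assert (Q2 := pyth (al - ps)). fold sg in Q2.
    rewrite Hc' in Q1. lra. }
  destruct H1 as [_ [_ T1]].
  assert (St1 : 0 < sin (th x1)) by (apply sin_gt_0; lra).
  assert (Hsg2 : Rb^2 * sg^2 < 4).
  { rewrite <- Hsg. assert (0 < Rb * sin (th x1)) by nra. nra. }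
  assert (Sag := sagitta (posx phis Rb x0) (posy phis Rb x0) (posx phis Rb x1) (posy phis Rb x1)
     (- sin al) (cos al) (-t) ltac:(lra) ltac:(lra) ltac:(rewrite <- (pyth al); ring)).
  rewrite B3, A4 in Sag. rewrite B1, B2 in Sag.
  assert (Qv : Rb * cos ps * - sin al + Rb * sin ps * cos al = - (Rb * sg)).
  { unfold sg. rewrite sin_minus. ring. }
  rewrite Qv in Sag.
  assert (Hcc : c * (cos phis - cos f) < 2) by nra.
  destruct H0 as [_ [Hf Tf]]. fold f th0 in Hf, Tf.
  destruct (L2 phis Rb E d f N Hf Hcc) as [u [Hu [Hfu|Hfu]]].
  -
    right.
    assert (Hsb : - (2*E) <= sin (al - ps - PI) <= 2*E).
    { rewrite sin_shift1. fold sg. assert (Rb * (sg) < 2 /\ -2 < Rb * sg) by (split; nra).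
      assert (Hr : 2 / Rb <= 2 * E) by (unfold Rdiv; nra).
      split; apply (Rmult_le_reg_l Rb); try lra; field_simplify; nra. }
    assert (Hx := SL (al - ps - PI) (phis + u - ps - PI) (phis + u - ps) (2*E)
       ltac:(lra) ltac:(unfold al; lra) ltac:(unfold al; lra) ltac:(lra) Hsb ltac:(lra)
       ltac:(lra) ltac:(lra)).
    unfold in_ball. fold f th0. apply (ball_ok _ _ E d); auto; unfold al in Hx; lra.
  - left.
    assert (Hsb : - (2*E) <= sin (al - ps - 2*PI) <= 2*E).
    { rewrite sin_shift2. fold sg. assert (Rb * (sg) < 2 /\ -2 < Rb * sg) by (split; nra).
      assert (Hr : 2 / Rb <= 2 * E) by (unfold Rdiv; nra).
      split; apply (Rmult_le_reg_l Rb); try lra; field_simplify; nra. }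
    assert (Hx := SL (al - ps - 2*PI) (- phis - u - ps) (PI - phis - u - ps) (2*E)
       ltac:(lra) ltac:(unfold al; lra) ltac:(unfold al; lra) ltac:(lra) Hsb ltac:(lra)
       ltac:(lra) ltac:(lra)).
    unfold in_ball. fold f th0. apply (ball_ok _ _ E d); auto; unfold al in Hx; lra.
Qed.

Lemma estB phis Rb E d z x2 : NC phis Rb E d -> inMR phis Rb z -> inMr phis Rb x2 ->
  Fmap phis Rb z x2 -> Rb * sin (th z) < 2 ->
  in_ball (2 * PI - phis) (PI - phis) d x2 \/ in_ball phis phis d x2.
Proof. intros N H1 H0 [_ [_ [[t [Ht [Ex Ey]]] Hc]]] Hd.
  pose proof N as [H [HR [HE [HE1 [Hdd [Hd1 Hd2]]]]]].
  destruct (NC_facts _ _ _ _ N) as [S0 [S1 [K0 [P [E1 [E2 [E3 R0]]]]]]].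
  destruct (Mr_facts phis Rb x2 H HR H0) as [A1 [A2 [A3 [A4 [A5 A6]]]]].
  destruct (MR_facts phis Rb z H HR H1) as [B1 [B2 [B3 [B4 [B5 [B6 B7]]]]]].
  set (c := dist_centers phis Rb) in *.
  set (f := ph x2) in *. set (th2 := th x2) in *. set (ps := ph z) in *. set (tz := th z) in *.
  set (al := ps + tz).
  rewrite velx_eq in Ex, Hc. rewrite vely_eq in Ey, Hc. fold ps tz al in Ex, Ey, Hc.
  unfold tanx, tany in Hc. fold f in Hc.
  assert (Hc' : cos th2 = cos (al - f)) by (rewrite cos_minus, Hc; ring).
  destruct H1 as [_ [_ T1]]. fold tz in T1.
  assert (St1 : 0 < sin tz) by (apply sin_gt_0; lra).
  assert (Sag := sagitta (posx phis Rb x2) (posy phis Rb x2) (posx phis Rb z) (posy phis Rb z)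
     (- sin al) (cos al) t ltac:(lra) ltac:(lra) ltac:(rewrite <- (pyth al); ring)).
  rewrite B3, A4 in Sag. rewrite B1, B2 in Sag.
  assert (Qv : Rb * cos ps * - sin al + Rb * sin ps * cos al = - (Rb * sin tz)).
  { unfold al. rewrite sin_plus, cos_plus.
    match goal with |- ?L = ?R => assert (L - R = - Rb * sin tz * (sin ps ^2 + cos ps ^2 - 1)) by ring end.
    rewrite pyth in H1. lra. }
  rewrite Qv in Sag.
  assert (Hsg2 : (- (Rb * sin tz))^2 < 4).
  { assert (0 < Rb * sin tz) by nra. nra. }
  assert (Hcc : c * (cos phis - cos f) < 2) by lra.
  destruct H0 as [_ [Hf Tf]]. fold f th2 in Hf, Tf.
  assert (Hst : sin tz <= 2 * E).
  { assert (Hr : 2 / Rb <= 2 * E) by (unfold Rdiv; nra).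
    apply (Rmult_le_reg_l Rb); try lra. field_simplify; nra. }
  assert (PP := PI2_1).
  destruct (L2 phis Rb E d f N Hf Hcc) as [u [Hu [Hfu|Hfu]]].
  -
    right.
    assert (Sf : sin phis <= sin f) by (rewrite Hfu; apply sin_incr_1; lra).
    assert (Hca : 0 < cos al).
    { assert (t * cos al > 0) by lra. destruct (Rle_lt_dec (cos al) 0); auto. nra. }
    assert (Htz : tz <= PI/2).
    { destruct (Rle_lt_dec tz (PI/2)) as [|Hl]; auto. exfalso.
      assert (PI - tz <= 5/4 * (2*E)) by (apply Jb; [lra| rewrite sin_PI_x; lra| lra]).
      assert (cos al = - cos (ps - (PI - tz))).
      { rewrite <- neg_cos. unfold al. f_equal. ring. }
      assert (0 < cos (ps - (PI - tz))) by (apply cos_gt_0; lra). lra. }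
    assert (Htz2 : tz <= 5/4 * (2*E)) by (apply Jb; lra).
    assert (Eth : th2 = phis - (ps + tz - u)).
    { apply cos_inj; try lra. rewrite Hc'. rewrite <- cos_neg. f_equal. unfold al. lra. }
    unfold in_ball. fold f th2. apply (ball_ok _ _ E d); auto; lra.
  - left.
    assert (Sf : sin f <= - sin phis).
    { rewrite Hfu. replace (2 * PI - phis - u) with (2*PI - (phis + u)) by ring.
      rewrite sin_2PI_minus. assert (sin phis <= sin (phis+u)) by (apply sin_incr_1; lra). lra. }
    assert (Hca : cos al < 0).
    { assert (t * cos al < 0) by lra. destruct (Rle_lt_dec 0 (cos al)); auto. nra. }
    assert (Htz : PI/2 < tz).
    { destruct (Rle_lt_dec tz (PI/2)) as [Hl|]; auto. exfalso.
      assert (tz <= 5/4 * (2*E)) by (apply Jb; lra).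
      assert (0 < cos al) by (apply cos_gt_0; unfold al; lra). lra. }
    assert (Hw : PI - tz <= 5/4 * (2*E)) by (apply Jb; [lra| rewrite sin_PI_x; lra| lra]).
    assert (Eth : th2 = PI - phis - (ps - (PI - tz) + u)).
    { apply cos_inj; try lra. rewrite Hc'. rewrite <- cos_neg. unfold al. rewrite Hfu.
      f_equal. ring. }
    unfold in_ball. fold f th2. apply (ball_ok _ _ E d); auto; lra.
Qed.

Theorem mainTheorem3 (phis Rb : R) (x x0 x1 x2 : phase) :
  0 < phis < PI / 2 ->
  Rb >= Rmax (34 * rr / phis) (146 / 10 * rr / (delta_star phis * sin phis)) ->
  inMr phis Rb x ->
  is_x0 phis Rb x x0 ->
  is_x1 phis Rb x0 x1 ->
  is_x2 phis Rb x1 x2 ->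
  Rb * sin (th x1) < 2 * rr ->
  Vset phis Rb (delta_star phis) x0 /\ Uset phis Rb (delta_star phis) x2.
Proof.
  intros H HR _ [n0 [_ [Hout0 _]]] H01 [n1 [z [Hfz [Hzout [Hzmin Hz2]]]]] Hd.
  unfold rr in *.
  assert (S0 : 0 < sin phis) by (apply sin_gt_0; pose PI2_1; lra).
  set (d := delta_star phis) in *.
  assert (Hd1 : d <= phis) by apply Rmin_l.
  assert (Hd2 : d <= PI/2 - phis) by apply Rmin_r.
  assert (Hd0 : 0 < d) by (apply Rmin_glb_lt; lra).
  assert (HR1 := Rmax_l (34 * 1 / phis) (146 / 10 * 1 / (d * sin phis))).
  assert (HR2 := Rmax_r (34 * 1 / phis) (146 / 10 * 1 / (d * sin phis))).
  assert (P4 := PI_4).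
  assert (H17 : 17 <= Rb).
  { assert (34 * 1 / phis >= 17). { apply Rle_ge. apply (Rmult_le_reg_r phis); [lra|]. field_simplify; lra. }
    lra. }
  set (E := 1 / (Rb * sin phis)).
  assert (N : NC phis Rb E d).
  { unfold NC. split; auto. split; auto.
    assert (0 < Rb * sin phis) by nra.
    split. unfold E. apply Rdiv_lt_0_compat; lra.
    split. unfold E. field. lra.
    split; auto. unfold E.
    assert (0 < d * sin phis) by nra.
    assert (Rb * (d * sin phis) >= 146/10) .
    { assert (Rb >= 146 / 10 * 1 / (d * sin phis)) by lra.
      assert (Hm : Rb * (d * sin phis) >= 146 / 10 * 1 / (d * sin phis) * (d * sin phis)).
      { apply Rmult_ge_compat_r; lra. }
      replace (146 / 10 * 1 / (d * sin phis) * (d * sin phis)) with (146/10) in Hm by (field; lra).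
      lra. }
    apply (Rmult_le_reg_r (Rb * sin phis)); [lra|]. field_simplify; lra. }
  assert (Hx0 : inMr phis Rb x0) by apply Hout0.
  assert (Hx1 : inMR phis Rb x1).
  { pose proof H01 as H01c. destruct H01c as [_ [[Hr|Hr] _]]; auto. exfalso. destruct Hout0 as [_ [y [Hy Fy]]].
    exact (uniq_side phis Rb x0 x1 y H H17 H01 Fy Hr Hy). }
  destruct (iter_R phis Rb H H17 n1 x1 z Hfz Hx1 Hzmin) as [Hz Hthz].
  assert (Hx2 : inMr phis Rb x2).
  { pose proof Hz2 as Hz2c. destruct Hz2c as [_ [[Hr|Hr] _]]; auto. exfalso. destruct Hzout as [_ [y [Hy Fy]]].
    exact (uniq_side phis Rb z y x2 H H17 Fy Hz2 Hy Hr). }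
  split.
  - split; auto. exact (estA phis Rb E d x0 x1 N Hx0 Hx1 H01 ltac:(lra)).
  - split. exact (estB phis Rb E d z x2 N Hz Hx2 Hz2 ltac:(rewrite Hthz; lra)).
    split; auto. exists z; auto.
Qed.
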